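(* For every integer $n\geq 1$, $$c_n(231,2143 : 231)=c_n(312,2143 : 312)=\begin{cases}\frac{4k^3+3k^2-k}{6}+1 & \text{if } n=2k,\\ \frac{4k^3+9k^2+5k}{6}+1 & \text{if } n=2k+1.\end{cases}$$
   Context: $S_n$ is the symmetric group on $[n]=\{1,\dots,n\}$, and a permutation $\pi\in S_n$ is written in one-line notation $\pi=\pi_1\pi_2\cdots\pi_n$ with $\pi_i=\pi(i)$. For $\tau\in S_k$, $k\le n$, $\pi$ contains $\tau$ if there are indices $i_1<\dots<i_k$ with $\pi_{i_s}>\pi_{i_t}$ iff $\tau_s>\tau_t$ for all $1\le s<t\le k$; otherwise $\pi$ avoids $\tau$. $\pi^2$ denotes the composition $\pi\circ\pi$. For patterns $\sigma_1,\sigma_2,\rho$, $c_n(\sigma_1,\sigma_2 : \rho)$ denotes the number of permutations $\pi\in S_n$ such that $\pi$ avoids both $\sigma_1$ and $\sigma_2$ and $\pi^2$ avoids $\rho$. *)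

(* Defs.v *)
From mathcomp Require Import all_boot all_order all_fingroup.
Set Implicit Arguments. Unset Strict Implicit. Unset Printing Implicit Defensive.

(* Permutations of [n] are represented as 'S_n (permutations of 'I_n = {0..n-1});
   the one-line value pi_i (1-based) is (pi (i-1)) + 1, order-isomorphic.
   A pattern tau is given in one-line notation as a list of naturals
   tau_1 ... tau_k (1-based, as in the paper). *)

Definition contains (n : nat) (pi : 'S_n) (tau : seq nat) : bool :=
  [exists idx : {ffun 'I_(size tau) -> 'I_n},
    [forall s : 'I_(size tau), forall t : 'I_(size tau), (s < t) ==>
       ((idx s < idx t) &&
        ((pi (idx s) > pi (idx t)) == (nth 0 tau s > nth 0 tau t)))]].

Definition avoids (n : nat) (pi : 'S_n) (tau : seq nat) : bool :=
  ~~ contains pi tau.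

(* c_n(sigma1, sigma2 : rho): number of pi in S_n avoiding sigma1 and sigma2
   with pi^2 = pi o pi avoiding rho. *)
Definition c_count (n : nat) (sigma1 sigma2 rho : seq nat) : nat :=
  #|[set pi : 'S_n | [&& avoids pi sigma1, avoids pi sigma2 & avoids (pi * pi)%g rho]]|.

(* Main.v *)
Require Import Defs.
From mathcomp Require Import all_boot all_order all_fingroup.
From mathcomp Require Import zify.
Set Implicit Arguments. Unset Strict Implicit. Unset Printing Implicit Defensive.

Definition av231 N (F : nat -> nat) := forall i j k, i < j -> j < k -> k < N ->
  F k < F i -> F i <= F j -> False.
Definition av2143 N (F : nat -> nat) := forall i j k l, i < j -> j < k -> k < l -> l < N ->
  F j < F i -> F i <= F l -> F l < F k -> False.

Lemma pig (f : nat -> nat) (s t : seq nat) :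
  {in s &, injective f} -> uniq s -> (forall x, x \in s -> f x \in t) ->
  size s <= size t.
Proof.
move=> fi us st; rewrite -(size_map f); apply: uniq_leq_size.
  by rewrite map_inj_in_uniq.
by move=> y /mapP [x xs ->]; apply: st.
Qed.

Section Char.
Variables (N : nat) (F : nat -> nat).
Hypothesis Finj : forall x y, x < N -> y < N -> F x = F y -> x = y.
Hypothesis Frng : forall x, x < N -> F x < N.
Hypothesis Fsurj : forall v, v < N -> exists2 x, x < N & F x = v.
Hypothesis A1 : av231 N F.
Hypothesis A2 : av2143 N F.
Hypothesis A3 : av231 N (fun i => F (F i)).
Variable a : nat.
Hypothesis aN : a < N.
Hypothesis Fa : F a != a.
Hypothesis Ffix : forall i, i < a -> F i = i.

Lemma G1 x : a <= x -> x < N -> a <= F x.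
Proof.
move=> ax xN; rewrite leqNgt; apply/negP => hx.
have h := Ffix hx. have := Finj (Frng xN) xN h. lia.
Qed.

Variable M : nat.
Hypothesis FaM : F a = M.
Lemma aM : a < M.
Proof. have := G1 (leqnn a) aN; move: Fa; rewrite FaM; lia. Qed.
Lemma MN : M < N.
Proof. rewrite -FaM; exact: Frng. Qed.

Lemma injP x y : x < N -> y < N -> x != y -> F x != F y.
Proof. move=> xN yN; apply: contra => /eqP h; apply/eqP; exact: Finj. Qed.

Lemma closure x : a <= x <= M -> F x <= M.
Proof.
move=> /andP [ax xM]; have xN : x < N by have := MN; lia.
rewrite leqNgt; apply/negP => hx.
have xa : a < x.
  rewrite ltn_neqAle ax andbT; apply/eqP => ex; move: hx; rewrite -ex FaM; lia.
have up : forall q, x <= q -> q < N -> M < F q.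
  move=> q xq qN; case: (ltngtP x q) xq => // [xq _ | <- //].
  rewrite ltnNge; apply/negP => FqM.
  have : F q != M by rewrite -FaM; apply: injP => //; lia.
  move=> FqM'; apply: (A1 (i:=a) (j:=x) (k:=q)) => //; rewrite FaM; lia.
suff : size (iota x (N - x)) <= size (iota M.+1 (N - M.+1)).
  by rewrite !size_iota; have := MN; lia.
apply: (@pig F).
- by move=> u v; rewrite !mem_iota => hu hv; apply: Finj; lia.
- exact: iota_uniq.
- move=> u; rewrite !mem_iota => hu; have uN : u < N by lia.
  have := up u ltac:(lia) uN; have := Frng uN; lia.
Qed.

Variable r : nat.
Hypothesis rN : r < N.
Hypothesis Fr : F r = a.

Lemma closure2 q : M < q -> q < N -> M < F q.
Proof.
move=> Mq qN; rewrite ltnNge; apply/negP => FqM.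
have aq : a <= q by have := aM; lia.
suff : size (q :: iota a (M.+1 - a)) <= size (iota a (M.+1 - a)).
  by rewrite /= !size_iota; lia.
apply: (@pig F).
- move=> u v; rewrite !inE !mem_iota => hu hv; apply: Finj.
  + case/orP: hu => [/eqP -> //|]; have := MN; lia.
  + case/orP: hv => [/eqP -> //|]; have := MN; lia.
- rewrite /= iota_uniq andbT mem_iota; lia.
- move=> u; rewrite !inE !mem_iota => /orP [/eqP ->|hu].
  + have := G1 aq qN; lia.
  + have uN : u < N by have := MN; lia.
    have := G1 (x:=u) ltac:(lia) uN; have := closure (x:=u) ltac:(lia); lia.
Qed.

Lemma rM : a < r /\ r <= M.
Proof.
split.
- rewrite ltn_neqAle; apply/andP; split.
  + by apply/eqP => ar; move: Fa; rewrite {1}ar Fr eqxx.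
  + rewrite leqNgt; apply/negP => ra; have := Ffix ra; rewrite Fr; lia.
- rewrite leqNgt; apply/negP => Mr; have := closure2 Mr rN; rewrite Fr; have := aM; lia.
Qed.

Lemma tail_inc q1 q2 : M < q1 -> q1 < q2 -> q2 < N -> F q1 < F q2.
Proof.
move=> h1 h2 h3; rewrite ltnNge leq_eqVlt; apply/negP => /orP [/eqP e|h].
  have := Finj (x:=q2) (y:=q1) h3 ltac:(lia) e; lia.
have [ar rM'] := rM.
have h4 := closure2 (q:=q2) ltac:(lia) h3; have h5 := aM.
apply: (A2 (i:=a) (j:=r) (k:=q1) (l:=q2)) => //; rewrite ?Fr ?FaM; lia.
Qed.

Lemma tail q : M < q -> q < N -> F q = q.
Proof.
move=> Mq qN; case: (ltngtP (F q) q) => // h.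
- suff : size (iota M.+1 (q - M)) <= size (iota M.+1 (q - M.+1)).
    by rewrite !size_iota; lia.
  apply: (@pig F).
  + by move=> u v; rewrite !mem_iota => hu hv; apply: Finj; lia.
  + exact: iota_uniq.
  + move=> u; rewrite !mem_iota => hu.
    have h1 := closure2 (q:=u) ltac:(lia) ltac:(lia).
    have : F u <= F q.
      case: (ltngtP u q) => uq; [apply: ltnW; apply: tail_inc; lia | lia | by rewrite uq].
    lia.
- suff : size (iota q (N - q)) <= size (iota q.+1 (N - q.+1)).
    by rewrite !size_iota; lia.
  apply: (@pig F).
  + by move=> u v; rewrite !mem_iota => hu hv; apply: Finj; lia.
  + exact: iota_uniq.
  + move=> u; rewrite !mem_iota => hu.
    have h1 := Frng (x:=u) ltac:(lia).
    have : F q <= F u.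
      case: (ltngtP q u) => qu; [apply: ltnW; apply: tail_inc; lia | lia | by rewrite qu].
    lia.
Qed.

Lemma blk x : a <= x <= M -> a <= F x <= M.
Proof.
move=> hx; rewrite closure // andbT; apply: G1; have := MN; lia.
Qed.

Local Notation F2 i := (F (F i)).

Lemma F2inj x y : x < N -> y < N -> F2 x = F2 y -> x = y.
Proof. move=> xN yN e; apply: Finj => //; apply: Finj => //; exact: Frng. Qed.

Lemma F2r : F2 r = M.
Proof. by rewrite Fr. Qed.

Lemma blk2 x : a <= x <= M -> a <= F2 x <= M.
Proof. by move=> hx; apply: blk; apply: blk. Qed.

Lemma F2lt x : a <= x <= M -> x != r -> F2 x < M.
Proof.
move=> hx xr; have /andP [_ h] := blk2 hx; rewrite ltn_neqAle h andbT.
apply/eqP => e.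
have xN : x < N by have := MN; lia.
have h' := F2inj xN rN; rewrite e F2r in h'.
by rewrite h' // eqxx in xr.
Qed.

Lemma Sq i k : a <= i < r -> r < k <= M -> F2 i < F2 k.
Proof.
move=> hi hk; have [ar rM'] := rM.
have hi2 := F2lt (x:=i) ltac:(lia) ltac:(apply/eqP; lia).
rewrite ltnNge leq_eqVlt; apply/negP => /orP [/eqP e|h].
  have := F2inj (x:=k) (y:=i) ltac:(have := MN; lia) ltac:(have := MN; lia) e; lia.
apply: (A3 (i:=i) (j:=r) (k:=k)) => //; try lia.
- have := MN; lia.
- rewrite F2r; lia.
Qed.

Lemma C1 i : a <= i < r -> F2 i < r.
Proof.
move=> hi; have [ar rM'] := rM.
rewrite ltnNge; apply/negP => ri.
suff : size (i :: iota r.+1 (M - r)) <= size (iota r (M - r)).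
  by rewrite /= !size_iota; lia.
apply: (@pig (fun x => F2 x)).
- move=> u v; rewrite !inE !mem_iota => hu hv; apply: F2inj.
  + case/orP: hu => [/eqP -> |]; have := MN; lia.
  + case/orP: hv => [/eqP -> |]; have := MN; lia.
- rewrite /= iota_uniq andbT mem_iota; lia.
- move=> u; rewrite !inE !mem_iota => /orP [/eqP ->|hu].
  + have := F2lt (x:=i) ltac:(lia) ltac:(apply/eqP; lia); lia.
  + have := F2lt (x:=u) ltac:(lia) ltac:(apply/eqP; lia).
    have := Sq (i:=i) (k:=u) ltac:(lia) ltac:(lia); lia.
Qed.

Lemma C2 k : r < k <= M -> r <= F2 k.
Proof.
move=> hk; have [ar rM'] := rM.
rewrite leqNgt; apply/negP => kr.
suff : size (k :: iota a (r - a)) <= size (iota a (r - a)).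
  by rewrite /= !size_iota; lia.
apply: (@pig (fun x => F2 x)).
- move=> u v; rewrite !inE !mem_iota => hu hv; apply: F2inj.
  + case/orP: hu => [/eqP -> |]; have := MN; lia.
  + case/orP: hv => [/eqP -> |]; have := MN; lia.
- rewrite /= iota_uniq andbT mem_iota; lia.
- move=> u; rewrite !inE !mem_iota => /orP [/eqP ->|hu].
  + have := blk2 (x:=k) ltac:(lia); lia.
  + have := blk2 (x:=u) ltac:(lia).
    have := Sq (i:=u) (k:=k) ltac:(lia) ltac:(lia); lia.
Qed.

Lemma dec i j : a <= i -> i < j -> j <= r -> F j < F i.
Proof.
move=> ai ij jr; have [ar rM'] := rM.
have Fi := blk (x:=i) ltac:(lia).
have Fia : F i != a.
  rewrite -Fr; apply: injP; try lia; have := MN; lia.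
case: (ltngtP j r) jr => // [jr _ | -> _]; last by rewrite Fr; lia.
rewrite ltnNge leq_eqVlt; apply/negP => /orP [/eqP e|h].
  have := Finj (x:=i) (y:=j) ltac:(have := MN; lia) ltac:(have := MN; lia) e; lia.
have Fia' : a < F i by move: Fi Fia; lia.
apply: (A1 (i:=i) (j:=j) (k:=r)) => //; rewrite ?Fr; lia.
Qed.

Lemma S1 k0 l : r < k0 -> k0 < l -> l <= M -> F r.-1 < F k0 -> F k0 < F l.
Proof.
move=> h1 h2 h3 h4; have [ar rM'] := rM.
have lN : l < N by have := MN; lia.
have ul : F r.-1 < F l.
  rewrite ltnNge leq_eqVlt; apply/negP => /orP [/eqP e|h].
    have := Finj (x:=l) (y:=r.-1) lN ltac:(lia) e; lia.
  by apply: (A1 (i:=r.-1) (j:=k0) (k:=l)) => //; lia.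
rewrite ltnNge leq_eqVlt; apply/negP => /orP [/eqP e|h].
  have := Finj (x:=l) (y:=k0) lN ltac:(lia) e; lia.
have hp := blk (x:=r.-1) ltac:(lia).
have hpa : F r.-1 != a by rewrite -Fr; apply: injP; lia.
apply: (A2 (i:=r.-1) (j:=r) (k:=k0) (l:=l)) => //; rewrite ?Fr; lia.
Qed.

Lemma Top k : r < k -> k <= M -> F k < F r.-1.
Proof.
move=> h1 h2; have [ar rM'] := rM.
have hN := MN.
rewrite ltnNge leq_eqVlt; apply/negP => /orP [/eqP e|hk0].
  have := Finj (x:=r.-1) (y:=k) ltac:(lia) ltac:(lia) e; lia.
have hMr : r < M by lia.
have hw : F k <= F M.
  case: (ltngtP k M) => kM; [apply: ltnW; exact: S1 | lia | by rewrite kM].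
have S2 : forall k1, r < k1 -> k1 < M -> F k1 < F M.
  move=> k1 r1 k1M; case: (ltngtP (F r.-1) (F k1)) => hh.
  - exact: S1.
  - lia.
  - have := Finj (x:=r.-1) (y:=k1) ltac:(lia) ltac:(lia) hh; lia.
have hwr : F M != r.
  apply/eqP => e; have := C2 (k:=M) ltac:(lia); rewrite e Fr; lia.
have hwM : F M != M.
  rewrite -{2}FaM; apply: injP; lia.
have hbM := blk (x:=M) ltac:(lia).
case: (ltngtP (F M) r) hwr => // hwr _.
- have hp := blk (x:=r.-1) ltac:(lia).
  have hd := dec (i:=F r.-1) (j:=F M) ltac:(lia) ltac:(lia) ltac:(lia).
  have := C2 (k:=M) ltac:(lia).
  have := C1 (i:=r.-1) ltac:(lia).
  lia.
- have h3 := S2 (F M) hwr ltac:(lia).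
  have := Sq (i:=a) (k:=M) ltac:(lia) ltac:(lia).
  rewrite FaM; lia.
Qed.

Lemma bexp t : a + t < r -> F (a + t) = M - t.
Proof.
have [ar rM'] := rM; have hN := MN.
elim: t => [|t IH] h; first by rewrite addn0 subn0 FaM.
have IH' := IH ltac:(lia).
have hd := dec (i:=a + t) (j:=a + t.+1) ltac:(lia) ltac:(lia) ltac:(lia).
rewrite IH' in hd.
case: (ltngtP (F (a + t.+1)) (M - t.+1)) => // hlt; last by lia.
have [x xN Fx] := Fsurj (v:=M - t.+1) ltac:(lia).
have hb := blk (x:=a + t.+1) ltac:(lia).
exfalso.
case: (ltnP x a) => xa.
  have := Ffix xa; lia.
case: (ltnP M x) => Mx.
  have := closure2 Mx xN; lia.
case: (ltnP (a + t) x) => xt; last first.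
  case: (ltngtP x (a + t)) xt => // xt _.
  - have := dec (i:=x) (j:=a + t) ltac:(lia) ltac:(lia) ltac:(lia); lia.
  - move: Fx; rewrite xt IH'; lia.
case: (ltnP r x) => rx.
  have := Top rx Mx.
  case: (ltngtP (a + t.+1) r.-1) => h'.
  - have := dec (i:=a + t.+1) (j:=r.-1) ltac:(lia) ltac:(lia) ltac:(lia); lia.
  - lia.
  - rewrite -h'; lia.
case: (ltngtP x (a + t.+1)) => h'; first lia.
- have := dec (i:=a + t.+1) (j:=x) ltac:(lia) ltac:(lia) ltac:(lia); lia.
- move: Fx; rewrite h'; lia.
Qed.

Lemma bexp' x : a <= x < r -> F x = M + a - x.
Proof.
move=> hx; have := bexp (t:=x - a) ltac:(lia).
have [ar rM'] := rM; have := aM.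
have -> : a + (x - a) = x by lia.
lia.
Qed.

Lemma valid : M + a < r.*2.
Proof.
have [ar rM'] := rM; have hN := MN.
rewrite ltnNge; apply/negP => hv.
have [x xN Fx] := Fsurj rN.
case: (ltnP x a) => xa.
  have := Ffix xa; lia.
case: (ltnP M x) => Mx.
  have := closure2 Mx xN; lia.
case: (ltnP x r) => xr.
  have := bexp' (x:=x) ltac:(lia); lia.
case: (ltngtP x r) xr => // xr _; last by move: Fx; rewrite xr Fr; lia.
have := C2 (k:=x) ltac:(lia); rewrite Fx Fr; lia.
Qed.

Lemma Inc k l : r < k -> k < l -> l <= M -> F k < F l.
Proof.
move=> h1 h2 h3; have [ar rM'] := rM; have hN := MN; have hv := valid.
rewrite ltnNge leq_eqVlt; apply/negP => /orP [/eqP e|h].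
  have := Finj (x:=l) (y:=k) ltac:(lia) ltac:(lia) e; lia.
have key : forall y, r <= y <= M -> F (a + (M - y)) = y.
  move=> y hy; rewrite bexp'; lia.
have hl := blk (x:=l) ltac:(lia).
have hla : F l != a by rewrite -Fr; apply: injP; lia.
apply: (A3 (i:=a + (M - l)) (j:=a + (M - k)) (k:=a + (M - r))); try lia;
  rewrite ?key ?Fr; lia.
Qed.

Lemma aexp t : r + t <= M -> F (r + t) = a + t.
Proof.
have [ar rM'] := rM; have hN := MN; have hv := valid.
elim: t => [|t IH] h; first by rewrite addn0 Fr addn0.
have IH' := IH ltac:(lia).
have hi := Inc (k:=r + t) (l:=r + t.+1).
have hi' : a + t < F (r + t.+1).
  case: t IH IH' hi h => [|t] IH IH' hi h.
  - have := blk (x:=r + 1) ltac:(lia).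
    have : F (r + 1) != a by rewrite -Fr; apply: injP; lia.
    rewrite addn0; lia.
  - rewrite -IH'; apply: hi; lia.
case: (ltngtP (F (r + t.+1)) (a + t.+1)) => // hlt; first by lia.
have hb := blk (x:=r + t.+1) ltac:(lia).
have [x xN Fx] := Fsurj (v:=a + t.+1) ltac:(lia).
exfalso.
case: (ltnP x a) => xa.
  have := Ffix xa; lia.
case: (ltnP M x) => Mx.
  have := closure2 Mx xN; lia.
case: (ltnP x r) => xr.
  have := bexp' (x:=x) ltac:(lia).
  have := Top (k:=r + t.+1) ltac:(lia) ltac:(lia).
  rewrite (bexp' (x:=r.-1)); lia.
case: (ltnP (r + t) x) => xt.
  case: (ltngtP x (r + t.+1)) => h'; first lia.
  - have := Inc (k:=r + t.+1) (l:=x) ltac:(lia) ltac:(lia) ltac:(lia); lia.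
  - move: Fx; rewrite h'; lia.
case: (ltngtP x (r + t)) xt => // h' _.
- case: (ltngtP x r) xr => // h'' _.
  + have := Inc (k:=x) (l:=r + t) ltac:(lia) ltac:(lia) ltac:(lia); lia.
  + move: Fx; rewrite h'' Fr; lia.
- move: Fx; rewrite h'; lia.
Qed.

Definition fam (a e M i : nat) :=
  if i < a then i else if i < M - e then M + a - i
  else if i <= M then a + i - (M - e) else i.

Lemma char i : i < N -> F i = fam a (M - r) M i.
Proof.
move=> iN; have [ar rM'] := rM; have hN := MN; rewrite /fam.
have -> : M - (M - r) = r by lia.
case: ifP => h1; first exact: Ffix.
case: ifP => h2; first by rewrite bexp'; lia.
case: ifP => h3; last by apply: tail; lia.
have := aexp (t:=i - r) ltac:(lia).
have -> : r + (i - r) = i by lia.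
lia.
Qed.
End Char.

Lemma contains3 n (p : 'S_n) x y z :
  contains p [:: x; y; z] =
  [exists i : 'I_n, exists j : 'I_n, exists k : 'I_n,
    [&& i < j, j < k, (p j < p i) == (y < x), (p k < p i) == (z < x)
      & (p k < p j) == (z < y)]].
Proof.
apply/existsP/existsP.
- move=> [idx /forallP H].
  exists (idx (@Ordinal 3 0 isT)); apply/existsP.
  exists (idx (@Ordinal 3 1 isT)); apply/existsP.
  exists (idx (@Ordinal 3 2 isT)).
  have h01 := implyP (forallP (H (@Ordinal 3 0 isT)) (@Ordinal 3 1 isT)) isT.
  have h02 := implyP (forallP (H (@Ordinal 3 0 isT)) (@Ordinal 3 2 isT)) isT.
  have h12 := implyP (forallP (H (@Ordinal 3 1 isT)) (@Ordinal 3 2 isT)) isT.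
  case/andP: h01 => -> ->; case/andP: h02 => _ ->; case/andP: h12 => -> ->.
  by [].
- move=> [i /existsP [j /existsP [k /and5P [hij hjk e1 e2 e3]]]].
  exists [ffun s : 'I_3 => nth i [:: i; j; k] s].
  apply/forallP => s; apply/forallP => t; apply/implyP => hst.
  rewrite !ffunE.
  case: s hst => [[|[|[|s]]] hs] //=; case: t => [[|[|[|t]]] ht] //= _;
  by rewrite ?hij ?hjk ?e1 ?e2 ?e3 ?(ltn_trans hij hjk).
Qed.
Lemma contains4 n (p : 'S_n) x y z w :
  contains p [:: x; y; z; w] =
  [exists i : 'I_n, exists j : 'I_n, exists k : 'I_n, exists l : 'I_n,
    [&& i < j, j < k, k < l,
      (p j < p i) == (y < x), (p k < p i) == (z < x), (p l < p i) == (w < x),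
      (p k < p j) == (z < y), (p l < p j) == (w < y)
      & (p l < p k) == (w < z)]].
Proof.
apply/existsP/existsP.
- move=> [idx /forallP H].
  exists (idx (@Ordinal 4 0 isT)); apply/existsP.
  exists (idx (@Ordinal 4 1 isT)); apply/existsP.
  exists (idx (@Ordinal 4 2 isT)); apply/existsP.
  exists (idx (@Ordinal 4 3 isT)).
  have h01 := implyP (forallP (H (@Ordinal 4 0 isT)) (@Ordinal 4 1 isT)) isT.
  have h02 := implyP (forallP (H (@Ordinal 4 0 isT)) (@Ordinal 4 2 isT)) isT.
  have h03 := implyP (forallP (H (@Ordinal 4 0 isT)) (@Ordinal 4 3 isT)) isT.
  have h12 := implyP (forallP (H (@Ordinal 4 1 isT)) (@Ordinal 4 2 isT)) isT.
  have h13 := implyP (forallP (H (@Ordinal 4 1 isT)) (@Ordinal 4 3 isT)) isT.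
  have h23 := implyP (forallP (H (@Ordinal 4 2 isT)) (@Ordinal 4 3 isT)) isT.
  case/andP: h01 => -> ->; case/andP: h02 => _ ->; case/andP: h03 => _ ->.
  case/andP: h12 => -> ->; case/andP: h13 => _ ->; case/andP: h23 => -> ->.
  by [].
- move=> [i /existsP [j /existsP [k /existsP [l /and5P [hij hjk hkl e1 /and5P [e2 e3 e4 e5 e6]]]]]].
  exists [ffun s : 'I_4 => nth i [:: i; j; k; l] s].
  have hik := ltn_trans hij hjk. have hjl := ltn_trans hjk hkl.
  have hil := ltn_trans hik hkl.
  apply/forallP => s; apply/forallP => t; apply/implyP => hst.
  rewrite !ffunE.
  case: s hst => [[|[|[|[|s]]]] hs] //=; case: t => [[|[|[|[|t]]]] ht] //= _;
  by rewrite ?hij ?hjk ?hkl ?hik ?hjl ?hil ?e1 ?e2 ?e3 ?e4 ?e5 ?e6.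
Qed.


Definition Fp n (p : 'S_n.+1) (i : nat) : nat := p (inord i).

Lemma Fp_ord n (p : 'S_n.+1) (i : 'I_n.+1) : Fp p i = p i.
Proof. by rewrite /Fp inord_val. Qed.

Lemma av231_of n (p : 'S_n.+1) : avoids p [:: 2; 3; 1] -> av231 n.+1 (Fp p).
Proof.
rewrite /avoids contains3 => /existsP H i j k hij hjk hkN h1 h2; apply: H.
exists (inord i); apply/existsP; exists (inord j); apply/existsP; exists (inord k).
rewrite /= eqbF_neg !eqb_id -leqNgt !inordK; rewrite /Fp in h1 h2; try lia.
Qed.

Lemma of_av231 n (p : 'S_n.+1) : av231 n.+1 (Fp p) -> avoids p [:: 2; 3; 1].
Proof.
move=> H; rewrite /avoids contains3; apply/existsP => -[i /existsP [j /existsP [k]]].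
rewrite /= eqbF_neg !eqb_id -leqNgt => /and5P [hij hjk e1 e2 e3].
apply: (H i j k) => //; rewrite ?Fp_ord //.
Qed.

Lemma av2143_of n (p : 'S_n.+1) : avoids p [:: 2; 1; 4; 3] -> av2143 n.+1 (Fp p).
Proof.
rewrite /avoids contains4 => /existsP H i j k l hij hjk hkl hlN h1 h2 h3; apply: H.
exists (inord i); apply/existsP; exists (inord j); apply/existsP; exists (inord k).
apply/existsP; exists (inord l).
rewrite /= !eqbF_neg !eqb_id -!leqNgt !inordK; rewrite /Fp in h1 h2 h3; try lia.
Qed.

Lemma of_av2143 n (p : 'S_n.+1) : av2143 n.+1 (Fp p) -> avoids p [:: 2; 1; 4; 3].
Proof.
move=> H; rewrite /avoids contains4; apply/existsP => -[i /existsP [j /existsP [k /existsP [l]]]].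
rewrite /= !eqbF_neg !eqb_id -!leqNgt => /and5P [hij hjk hkl e1 /and5P [e2 e3 e4 e5 e6]].
apply: (H i j k l) => //; rewrite ?Fp_ord //.
Qed.

Section Fam.
Variables (N a e M : nat).
Hypothesis hv : a + e.*2 < M.
Hypothesis hM : M < N.

Local Notation f := (fam a e M).

Definition fam2 i :=
  if i < a then i else if i <= a + e then a + e + a - i else if i < M - e then i
  else if i <= M then M + (M - e) - i else i.

Lemma famE1 i : i < a -> f i = i.
Proof. by rewrite /fam => ->. Qed.
Lemma famE2 i : a <= i -> i < M - e -> f i = M + a - i.
Proof. move=> h1 h2; rewrite /fam; do ! case: ifP => ?; lia. Qed.
Lemma famE3 i : M - e <= i -> i <= M -> f i = a + i - (M - e).
Proof. move=> h1 h2; rewrite /fam; do ! case: ifP => ?; lia. Qed.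
Lemma famE4 i : M < i -> f i = i.
Proof. move=> h; rewrite /fam; do ! case: ifP => ?; lia. Qed.

Lemma fam_rng i : i < N -> f i < N.
Proof. move=> iN; rewrite /fam; do ! case: ifP => ?; lia. Qed.

Lemma fam_inj i j : i < N -> j < N -> f i = f j -> i = j.
Proof. move=> iN jN; rewrite /fam; do ! case: ifP => ?; lia. Qed.

Lemma fam2E i : f (f i) = fam2 i.
Proof.
rewrite /fam2; case: (ltnP i a) => h1.
  by rewrite !famE1.
case: (ltnP (a + e) i) => h2.
  case: (ltnP i (M - e)) => h3.
    rewrite (famE2 (i:=i)) // famE2; lia.
  case: (leqP i M) => h4.
    rewrite (famE3 (i:=i)) // famE2; lia.
  by rewrite !famE4.
rewrite (famE2 (i:=i)); try lia. rewrite famE3; lia.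
Qed.

Lemma fam_av231 : av231 N f.
Proof. move=> i j k h1 h2 h3; rewrite /fam; do ! case: ifP => ?; lia. Qed.

Lemma fam_av2143 : av2143 N f.
Proof. move=> i j k l h1 h2 h3 h4; rewrite /fam; do ! case: ifP => ?; lia. Qed.

Lemma fam2_av231 : av231 N (fun i => f (f i)).
Proof. move=> i j k h1 h2 h3; rewrite !fam2E /fam2; do ! case: ifP => ?; lia. Qed.
End Fam.

Definition X (M : nat) := \sum_(0 <= e < M.+1) (M - e.*2).
Definition T (n : nat) := \sum_(0 <= M < n) X M.

Lemma sum_lt n c : \sum_(a < n) (a < c) = minn c n.
Proof.
elim: n => [|n IH]; first by rewrite big_ord0; lia.
rewrite big_ord_recr /= IH; case: (ltnP n c) => h; lia.
Qed.

Lemma sum_widen (f : nat -> nat) m n : m <= n -> (forall i, m <= i -> f i = 0) ->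
  \sum_(i < n) f i = \sum_(i < m) f i.
Proof.
move=> mn f0; elim: n mn => [|n IH] mn.
  by have -> : m = 0 by lia.
case: (ltngtP m n.+1) mn => // h _.
  by rewrite big_ord_recr /= IH // f0 // addn0.
by rewrite h.
Qed.

Lemma XS M : X M.+2 = X M + M.+2.
Proof.
rewrite /X big_nat_recl // [\sum_(0 <= i < M.+2) _]big_nat_recr //=.
rewrite (_ : M.+2 - (M.+2).*2 = 0); last by lia.
rewrite addn0 addnC; congr (_ + _); try lia.
Qed.

Lemma Xeven t : X t.*2 = t * t.+1.
Proof.
elim: t => [|t IH]; first by rewrite /X big_nat1.
have -> : (t.+1).*2 = (t.*2).+2 by lia.
rewrite XS IH; lia.
Qed.

Lemma Xodd t : X t.*2.+1 = t.+1 * t.+1.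
Proof.
elim: t => [|t IH]; first by rewrite /X !big_nat_recr //= big_geq.
have -> : (t.+1).*2.+1 = (t.*2.+1).+2 by lia.
rewrite XS IH; lia.
Qed.

Lemma TS n : T n.+1 = T n + X n.
Proof. by rewrite /T big_nat_recr. Qed.

Lemma Teven k : 6 * T k.*2 + k = 4 * (k * k * k) + 3 * (k * k).
Proof.
elim: k => [|k IH]; first by rewrite /T big_geq.
have -> : (k.+1).*2 = (k.*2.+1).+1 by lia.
rewrite !TS Xeven Xodd; nia.
Qed.

Lemma Todd k : 6 * T k.*2.+1 = 4 * (k * k * k) + 9 * (k * k) + 5 * k.
Proof. have := Teven k; rewrite TS Xeven; nia. Qed.

Lemma cardV n :
  #|[set t : 'I_n * ('I_n * 'I_n) | t.2.2 + (t.2.1).*2 < t.1]| = T n.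
Proof.
rewrite -sum1_card big_mkcond /=.
transitivity (\sum_(M < n) \sum_(ea : 'I_n * 'I_n) ((ea.2 + ea.1.*2 < M) : nat)).
  rewrite pair_big /=; apply: eq_bigr => [[M ea]] _; rewrite inE /=; by case: ltnP.
rewrite /T big_mkord; apply: eq_bigr => M _.
rewrite -(pair_big xpredT xpredT (fun e a : 'I_n => ((a + e.*2 < M) : nat))) /=.
have -> : \sum_(e < n) \sum_(a < n) ((a + e.*2 < M) : nat)
        = \sum_(e < n) (M - e.*2).
  apply: eq_bigr => e _.
  rewrite (_ : M - e.*2 = minn (M - e.*2) n); last by have := ltn_ord M; lia.
  rewrite -sum_lt; apply: eq_bigr => a _; case: ltnP; case: ltnP; lia.
rewrite /X big_mkord.
apply: (@sum_widen (fun e => M - e.*2) M.+1 n); [ have := ltn_ord M; lia | lia].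
Qed.

Lemma ord_neq n (p : 'S_n) (i j : 'I_n) : i < j -> (p i : nat) != p j.
Proof.
move=> h; apply/negP => /eqP e; have := perm_inj (val_inj e) => e'.
by move: h; rewrite e' ltnn.
Qed.

Lemma c231_312 n (p : 'S_n) : contains p^-1 [:: 2; 3; 1] -> contains p [:: 3; 1; 2].
Proof.
rewrite !contains3.
move=> /existsP [i /existsP [j /existsP [k]]].
rewrite /= !eqbF_neg !eqb_id -!leqNgt => /and5P [hij hjk e1 e2 e3].
have n1 := ord_neq (p^-1)%g hij.
apply/existsP; exists ((p^-1)%g k); apply/existsP; exists ((p^-1)%g i); apply/existsP; exists ((p^-1)%g j).
rewrite !permKV /= !eqbF_neg !eqb_id -!leqNgt; lia.
Qed.

Lemma c312_231 n (p : 'S_n) : contains p [:: 3; 1; 2] -> contains p^-1 [:: 2; 3; 1].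
Proof.
rewrite !contains3.
move=> /existsP [i /existsP [j /existsP [k]]].
rewrite /= !eqbF_neg !eqb_id -!leqNgt => /and5P [hij hjk e1 e2 e3].
have n1 := ord_neq p hjk.
apply/existsP; exists (p j); apply/existsP; exists (p k); apply/existsP; exists (p i).
rewrite !permK /= !eqbF_neg !eqb_id -!leqNgt; lia.
Qed.

Lemma c2143_inv n (p : 'S_n) : contains p [:: 2; 1; 4; 3] -> contains p^-1 [:: 2; 1; 4; 3].
Proof.
rewrite !contains4.
move=> /existsP [i /existsP [j /existsP [k /existsP [l]]]].
rewrite /= !eqbF_neg !eqb_id -!leqNgt => /and5P [hij hjk hkl e1 /and5P [e2 e3 e4 e5 e6]].
have n1 := ord_neq p hij. have n2 := ord_neq p hkl.
have n3 := ord_neq p (ltn_trans hij (ltn_trans hjk hkl)).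
apply/existsP; exists (p j); apply/existsP; exists (p i); apply/existsP; exists (p l).
apply/existsP; exists (p k).
rewrite !permK /= !eqbF_neg !eqb_id -!leqNgt; lia.
Qed.

Lemma count_inv n :
  c_count n [:: 2; 3; 1] [:: 2; 1; 4; 3] [:: 2; 3; 1] =
  c_count n [:: 3; 1; 2] [:: 2; 1; 4; 3] [:: 3; 1; 2].
Proof.
rewrite /c_count -(card_preimset _ (@invg_inj _)).
apply: eq_card => p; rewrite !inE /avoids -invMg.
have E1 : forall q : 'S_n, contains q^-1 [:: 2; 3; 1] = contains q [:: 3; 1; 2].
  by move=> q; apply/idP/idP; [apply: c231_312 | apply: c312_231].
have E2 : forall q : 'S_n, contains q^-1 [:: 2; 1; 4; 3] = contains q [:: 2; 1; 4; 3].
  move=> q; apply/idP/idP; last exact: c2143_inv.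
  by move/c2143_inv; rewrite invgK.
by rewrite !E1 E2.
Qed.

Lemma av231_ext N (F G : nat -> nat) :
  (forall i, i < N -> F i = G i) -> av231 N G -> av231 N F.
Proof.
move=> E H i j k h1 h2 h3.
rewrite (E i) ?(E j) ?(E k); try lia; exact: H h1 h2 h3.
Qed.

Lemma av2143_ext N (F G : nat -> nat) :
  (forall i, i < N -> F i = G i) -> av2143 N G -> av2143 N F.
Proof.
move=> E H i j k l h1 h2 h3 h4.
rewrite (E i) ?(E j) ?(E k) ?(E l); try lia; exact: H h1 h2 h3 h4.
Qed.

Section Main.
Variable n : nat.
Local Notation N := n.+1.

Definition validt (t : 'I_N * ('I_N * 'I_N)) := t.2.2 + (t.2.1).*2 < t.1.
Definition g t (i : nat) := if validt t then fam t.2.2 t.2.1 t.1 i else i.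

Lemma g_rng t i : i < N -> g t i < N.
Proof. move=> hi; rewrite /g /validt; case: ifP => hv //; exact: fam_rng hv (ltn_ord _) i hi. Qed.

Lemma g_inj t : injective (fun i : 'I_N => (inord (g t i) : 'I_N)).
Proof.
move=> i j /(congr1 (@nat_of_ord _)) /=; rewrite !inordK ?g_rng // => e; apply/val_inj.
move: e; rewrite /g /validt; case: ifP => hv e //.
exact: (fam_inj hv (ltn_ord t.1) (ltn_ord i) (ltn_ord j) e).
Qed.

Definition P t : 'S_N := perm (@g_inj t).

Lemma FpP t i : i < N -> Fp (P t) i = g t i.
Proof. by move=> hi; rewrite /Fp permE /= !inordK ?g_rng. Qed.

Lemma FpM (p q : 'S_N) i : Fp (p * q)%g i = Fp q (Fp p i).
Proof. by rewrite /Fp permM inord_val. Qed.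

Lemma Fp_inj (p : 'S_N) x y : x < N -> y < N -> Fp p x = Fp p y -> x = y.
Proof.
move=> hx hy /val_inj /perm_inj /(congr1 (@nat_of_ord _)); rewrite !inordK //.
Qed.

Lemma Fp_rng (p : 'S_N) x : x < N -> Fp p x < N.
Proof. by move=> _; apply: ltn_ord. Qed.

Lemma Fp_surj (p : 'S_N) v : v < N -> exists2 x, x < N & Fp p x = v.
Proof.
move=> hv; exists (val ((p^-1)%g (inord v))); first exact: ltn_ord.
by rewrite /Fp inord_val permKV inordK.
Qed.

Lemma Fp1 i : i < N -> Fp (1%g : 'S_N) i = i.
Proof. by move=> hi; rewrite /Fp perm1 inordK. Qed.

Definition Sset := [set p : 'S_N | [&& avoids p [:: 2; 3; 1], avoids p [:: 2; 1; 4; 3]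
   & avoids (p * p)%g [:: 2; 3; 1]]].
Definition V := [set t : 'I_N * ('I_N * 'I_N) | t.2.2 + (t.2.1).*2 < t.1].

Lemma S_sub p : p \in Sset -> p = 1%g \/ exists2 t, t \in V & p = P t.
Proof.
rewrite inE => /and3P [h1 h2 h3].
set F := Fp p.
have A1 := av231_of h1. have A2 := av2143_of h2.
have A3 : av231 N (fun i => F (F i)).
  by apply: av231_ext (av231_of h3) => i hi; rewrite FpM.
have Finj := @Fp_inj p. have Frng := @Fp_rng p. have Fsurj := @Fp_surj p.
case: (boolP [exists i : 'I_N, F i != i]) => [/existsP [i0 hi0] | hall].
- right.
  have exP : exists i, (i < N) && (F i != i) by exists i0; rewrite ltn_ord hi0.
  case: (ex_minnP exP) => a /andP [aN Fa] amin.
  have Ffix : forall i, i < a -> F i = i.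
    move=> i ia; apply/eqP; move: (ia); apply: contraTT => hi; rewrite -leqNgt.
    by apply: amin; rewrite hi andbT; lia.
  have [r rN Fr] := Fsurj a aN.
  have hchar := @char N F Finj Frng Fsurj A1 A2 A3 a aN Fa Ffix (F a) erefl r rN Fr.
  have hval := @valid N F Finj Frng Fsurj A1 A2 A3 a aN Fa Ffix (F a) erefl r rN Fr.
  have [ar rM'] := @rM N F Finj Frng A1 a aN Fa Ffix (F a) erefl r rN Fr.
  have MN : F a < N by apply: Frng.
  exists (inord (F a), (inord (F a - r), inord a)).
    rewrite inE /= !inordK; lia.
  apply/permP => x; apply: ord_inj.
  rewrite -!Fp_ord FpP ?ltn_ord // /g /validt /= !inordK; try lia.
  rewrite ifT; last by lia.
  exact: hchar.
- left; apply/permP => x; apply: ord_inj; rewrite perm1.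
  move/existsPn: hall => /(_ x); rewrite negbK => /eqP <-.
  by rewrite /F Fp_ord.
Qed.

Lemma S_sup p : (p = 1%g \/ exists2 t, t \in V & p = P t) -> p \in Sset.
Proof.
move=> [-> | [t tV ->]].
- have I1 : av231 N (Fp (1%g : 'S_N)) by apply: av231_ext Fp1 _ => i j k; lia.
  have I2 : av2143 N (Fp (1%g : 'S_N)) by apply: av2143_ext Fp1 _ => i j k l; lia.
  by rewrite inE mulg1 !of_av231 // of_av2143.
- move: tV; rewrite inE => hv.
  have hM := ltn_ord t.1.
  have E : forall i, i < N -> Fp (P t) i = fam t.2.2 t.2.1 t.1 i.
    by move=> i hi; rewrite FpP // /g /validt ifT.
  rewrite inE of_av231 ?of_av2143 ?of_av231 //.
  + apply: av231_ext (fam2_av231 hv hM) => i hi.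
    by rewrite FpM E ?Fp_rng // E.
  + exact: av2143_ext E (fam_av2143 hv hM).
  + exact: av231_ext E (fam_av231 hv hM).
Qed.

Lemma Sset_eq : Sset = (1%g |: (P @: V)).
Proof.
apply/setP => p; rewrite in_setU1; apply/idP/idP.
- move/S_sub => [->|[t tV ->]]; first by rewrite eqxx.
  by rewrite imset_f ?orbT.
- case/orP => [/eqP ->|/imsetP [t tV ->]]; apply: S_sup; [left | right; exists t] => //.
Qed.

Lemma famP_eq (t : 'I_N * ('I_N * 'I_N)) : t \in V ->
  forall i, i < N -> Fp (P t) i = fam t.2.2 t.2.1 t.1 i.
Proof. by rewrite inE => hv i hi; rewrite FpP // /g /validt ifT. Qed.

Lemma one_notin : 1%g \notin P @: V.
Proof.
apply/imsetP => -[t tV e].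
have hv := tV; rewrite inE in hv.
have hM := ltn_ord t.1.
have := famP_eq tV (ltn_ord t.2.2); rewrite -e Fp1 ?ltn_ord //.
move: hv hM; case: t {tV e} => [M [e' a]] /= hv hM.
rewrite (famE2 hv hM) //; lia.
Qed.

Lemma P_inj : {in V &, injective P}.
Proof.
move=> t1 t2 h1 h2 e.
have E : forall i, i < N -> fam t1.2.2 t1.2.1 t1.1 i = fam t2.2.2 t2.2.1 t2.1 i.
  by move=> i hi; rewrite -!famP_eq // e.
move: h1 h2 E; rewrite !inE; clear e.
case: t1 t2 => [M1 [e1 a1]] [M2 [e2 a2]] /= hv1 hv2 E.
have hM1 := ltn_ord M1; have hM2 := ltn_ord M2.
have ha : a1 = a2 :> nat.
  case: (ltngtP a1 a2) => // h.
  - have := E a1 ltac:(lia); rewrite (famE2 hv1 hM1) ?famE1; lia.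
  - have := E a2 ltac:(lia); rewrite (famE2 hv2 hM2 (i:=a2)) ?famE1; lia.
have hm : M1 = M2 :> nat.
  have := E a1 ltac:(lia); rewrite (famE2 hv1 hM1) ?(famE2 hv2 hM2); lia.
have he : e1 = e2 :> nat.
  case: (ltngtP e1 e2) => // h.
  - have := E (M1 - e1) ltac:(lia).
    rewrite (famE3 hv1 hM1) ?(famE3 hv2 hM2); lia.
  - have := E (M2 - e2) ltac:(lia).
    rewrite (famE3 hv1 hM1 (i:=M2 - e2)) ?(famE3 hv2 hM2); lia.
by rewrite (val_inj ha) (val_inj hm) (val_inj he).
Qed.

Lemma count_main :
  c_count N [:: 2; 3; 1] [:: 2; 1; 4; 3] [:: 2; 3; 1] = (T N).+1.
Proof.
rewrite /c_count -/Sset Sset_eq cardsU1 one_notin card_in_imset; last exact: P_inj.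
by rewrite -(cardV N).
Qed.
End Main.

Theorem theorem4p4 (n : nat) : 1 <= n ->
  c_count n [:: 2; 3; 1] [:: 2; 1; 4; 3] [:: 2; 3; 1] =
    c_count n [:: 3; 1; 2] [:: 2; 1; 4; 3] [:: 3; 1; 2] /\
  (forall k : nat, n = k.*2 ->
     c_count n [:: 2; 3; 1] [:: 2; 1; 4; 3] [:: 2; 3; 1] =
       (4 * k ^ 3 + 3 * k ^ 2 - k) %/ 6 + 1) /\
  (forall k : nat, n = k.*2.+1 ->
     c_count n [:: 2; 3; 1] [:: 2; 1; 4; 3] [:: 2; 3; 1] =
       (4 * k ^ 3 + 9 * k ^ 2 + 5 * k) %/ 6 + 1).
Proof.
case: n => [//|n] _.
split; first exact: count_inv.
split => k hk; rewrite count_main.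
- have := Teven k; rewrite -hk => h.
  have -> : 4 * k ^ 3 + 3 * k ^ 2 - k = 6 * T n.+1.
    rewrite (_ : k ^ 3 = k * k * k); last by rewrite !expnS expn0 muln1 mulnA.
    rewrite (_ : k ^ 2 = k * k); last by rewrite !expnS expn0 muln1.
    lia.
  by rewrite mulKn // addn1.
- have := Todd k; rewrite -hk => h.
  have -> : 4 * k ^ 3 + 9 * k ^ 2 + 5 * k = 6 * T n.+1.
    rewrite (_ : k ^ 3 = k * k * k); last by rewrite !expnS expn0 muln1 mulnA.
    rewrite (_ : k ^ 2 = k * k); last by rewrite !expnS expn0 muln1.
    lia.
  by rewrite mulKn // addn1.
Qed.
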